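(* Let $0=t_0<t_1<\dots<t_K$, $J_i=(t_{i-1},t_i]$, $\tau_i=t_i-t_{i-1}$, $X_i=C(J_i;\ell^1_\omega)$ with $\|a\|_{X_i}=\sup_{t\in J_i}\|a(t)\|_\omega$, $\gamma\in[0,1)$, $\hat\tau_i=\tau_i^{1-\gamma}/(1-\gamma)$. For each $i$ let $U_{J_i}(t,s)$, $t_{i-1}\le s\le t\le t_i$, be a family of bounded linear operators (the evolution operator of $\dot b=\mathcal Lb+\mathcal QD\mathcal N(\bar a^{J_i}(t))b$) and suppose there are positive constants with, for all $\phi,\psi\in\ell^1_\omega$: $\|U_{J_i}(t,s)\phi\|_\omega\le W^{S}_i\|\phi\|_\omega$ and $(t-s)^\gamma\|U_{J_i}(t,s)\mathcal Q\psi\|_\omega\le W^{S}_{q,i}\|\psi\|_\omega$ for $t_{i-1}\le s<t\le t_i$; $\|U_{J_i}(t_i,s)\phi\|_\omega\le W^{(t_i,J_i)}\|\phi\|_\omega$ and $(t_i-s)^\gamma\|U_{J_i}(t_i,s)\mathcal Q\psi\|_\omega\le W^{(t_i,J_i)}_q\|\psi\|_\omega$ for $s\in[t_{i-1},t_i)$; $\|U_{J_i}(t_i,t_{i-1})\phi\|_\omega\le W^{(t_i,t_{i-1})}\|\phi\|_\omega$. For $0\le j\le i$ set $W^{(t_i,t_j)}=W^{(t_i,t_{i-1})}\cdots W^{(t_{j+1},t_j)}$ (with $W^{(t_i,t_i)}=1$). Let $\mathbf W_\ell,\mathbf W_X,\mathbf W_Y$ be the matrix infinity norms (maximum absolute row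 sums) of the lower triangular $K\times K$ matrices with entries, for $1\le j\le i\le K$: $(M_\ell)_{ij}=W^S_iW^{(t_{i-1},t_{j-1})}$; $(M_X)_{ii}=\hat\tau_iW^S_{q,i}$ and $(M_X)_{ij}=\hat\tau_jW^S_iW^{(t_{i-1},t_j)}W_q^{(t_j,J_j)}$ for $j<i$; $(M_Y)_{ii}=\tau_iW^S_i$ and $(M_Y)_{ij}=\tau_jW^S_iW^{(t_{i-1},t_j)}W^{(t_j,J_j)}$ for $j<i$. Given $\phi^{J_i}\in\ell^1_\omega$ and $\psi^{J_i},p^{J_i}\in X_i$ ($i=1,\dots,K$), define recursively, with $h^{J_0}(t_0):=0$, $h^{J_i}(t)=U_{J_i}(t,t_{i-1})\big(\phi^{J_i}+h^{J_{i-1}}(t_{i-1})\big)+\int_{t_{i-1}}^tU_{J_i}(t,s)\big(\mathcal Q\psi^{J_i}(s)+p^{J_i}(s)\big)ds$, $t\in J_i$. Then $\max_i\|h^{J_i}\|_{X_i}\le\mathbf W_\ell\max_i\|\phi^{J_i}\|_\omega+\mathbf W_X\max_i\|\psi^{J_i}\|_{X_i}+\mathbf W_Y\max_i\|p^{J_i}\|_{X_i}$.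
   Context: Standing setting. Fix $d\ge1$ and $L_1,\dots,L_d>0$. Multi-indices are $\mathbf k=(k_1,\dots,k_d)\in\mathbb Z_{\ge0}^d$. Let $\alpha_{\mathbf k}=2^{\delta_{k_1,0}}\cdots2^{\delta_{k_d,0}}$, fix $\nu_F\ge1$, and set $\omega_{\mathbf k}=\alpha_{\mathbf k}\nu_F^{k_1+\cdots+k_d}$. $\ell^1_\omega$ is the Banach space of real sequences $a=(a_{\mathbf k})_{\mathbf k\ge0}$ with $\|a\|_\omega=\sum_{\mathbf k\ge0}|a_{\mathbf k}|\omega_{\mathbf k}<\infty$. Let $(\mathbf{kL})=((k_1L_1)^2+\cdots+(k_dL_d)^2)^{1/2}$. For given real $\lambda_0,\lambda_1,\lambda_2$ let $\mu_{\mathbf k}=\lambda_0-\lambda_1(\mathbf{kL})^2+\lambda_2(\mathbf{kL})^4$ and let $\mathcal L$ be the diagonal operator $(\mathcal L\phi)_{\mathbf k}=\mu_{\mathbf k}\phi_{\mathbf k}$. Fix $q\in\{0,2\}$ and let $(\mathcal Q\phi)_{\mathbf k}=\mathrm i^q(\mathbf{kL})^q\phi_{\mathbf k}$. $\mathcal N:\ell^1_\omega\to\ell^1_\omega$ is Fréchet differentiable with $\mathcal N(0)=0$, $D\mathcal N(0)=0$. For each $i$, $\bar a^{J_i}\in X_i$ is a given approximate solution on $J_i$. The evolution operators satisfy $U_{J_i}(s,s)=I$ and $U_{J_i}(t,r)U_{J_i}(r,s)=U_{J_i}(t,s)$. *)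

(* Defs.v *)
From HB Require Import structures.
From mathcomp Require Import all_boot all_order all_algebra.
From mathcomp Require Import all_classical all_reals all_analysis.
Set Implicit Arguments. Unset Strict Implicit. Unset Printing Implicit Defensive.
Import Order.TTheory GRing.Theory Num.Theory.
Import numFieldNormedType.Exports.
Local Open Scope classical_set_scope.
Local Open Scope ring_scope.

Definition mindex (d : nat) := {ffun 'I_d -> nat}.
Definition seqd (R : realType) (d : nat) := mindex d -> R.

Definition alpha (R : realType) (d : nat) (k : mindex d) : R :=
  \prod_(j < d) (2 : R) ^+ (k j == 0%N).
Definition omega (R : realType) (d : nat) (nuF : R) (k : mindex d) : R :=
  alpha R k * nuF ^+ (\sum_(j < d) k j)%N.
(* ||a||_omega = sum_k |a_k| omega_k  (extended-real valued; a is in l^1_omega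
   iff this is < +oo) *)
Definition wnorm (R : realType) (d : nat) (nuF : R) (a : seqd R d) : \bar R :=
  \esum_(k in [set: mindex d]) (`|a k| * omega nuF k)%:E.
Definition kL2 (R : realType) (d : nat) (L : 'I_d -> R) (k : mindex d) : R :=
  \sum_(j < d) ((k j)%:R * L j) ^+ 2.
(* (Q phi)_k = i^q (kL)^q phi_k, q in {0,2}: i^q = (-1)^(q/2), (kL)^q = ((kL)^2)^(q/2) *)
Definition Qop (R : realType) (d : nat) (L : 'I_d -> R) (q : nat)
  (phi : seqd R d) : seqd R d :=
  fun k => (-1) ^+ (q./2) * kL2 L k ^+ (q./2) * phi k.

Definition J (R : realType) (t : nat -> R) (i : nat) : set R :=
  [set s | t i.-1 < s <= t i].
Definition tau (R : realType) (t : nat -> R) (i : nat) : R := t i - t i.-1.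
Definition tauhat (R : realType) (t : nat -> R) (gamma : R) (i : nat) : R :=
  tau t i `^ (1 - gamma) / (1 - gamma).

Definition Xnorm (R : realType) (d : nat) (nuF : R) (D : set R)
  (f : R -> seqd R d) : \bar R :=
  ereal_sup [set wnorm nuF (f s) | s in D].

Definition Xmem (R : realType) (d : nat) (nuF : R) (D : set R)
  (f : R -> seqd R d) : Prop :=
  [/\ (forall s, D s -> (wnorm nuF (f s) < +oo)%E),
      (forall s, D s -> forall e : R, 0 < e -> exists2 del : R, 0 < del &
          forall s', D s' -> `|s' - s| < del ->
            (wnorm nuF (fun k => (f s' k - f s k)%R) < e%:E)%E)
    & (Xnorm nuF D f < +oo)%E].

Definition Wp (R : realType) (Wtt : nat -> R) (i j : nat) : R :=
  \prod_(j.+1 <= m < i.+1) Wtt m.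

(* lower triangular matrices (1-based indices, 1 <= j <= i <= K) *)
Definition Ml (R : realType) (WS Wtt : nat -> R) (i j : nat) : R :=
  if (j <= i)%N then WS i * Wp Wtt i.-1 j.-1 else 0.
Definition MX (R : realType) (t : nat -> R) (gamma : R)
  (WS WSq Wtt WqtJ : nat -> R) (i j : nat) : R :=
  if j == i then tauhat t gamma i * WSq i
  else if (j < i)%N then tauhat t gamma j * WS i * Wp Wtt i.-1 j * WqtJ j
  else 0.
Definition MY (R : realType) (t : nat -> R)
  (WS Wtt WtJ : nat -> R) (i j : nat) : R :=
  if j == i then tau t i * WS i
  else if (j < i)%N then tau t j * WS i * Wp Wtt i.-1 j * WtJ j
  else 0.

Definition infnorm (R : realType) (K : nat) (M : nat -> nat -> R) : R :=
  \big[Num.max/0]_(1 <= i < K.+1) \sum_(1 <= j < K.+1) `|M i j|.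

(* the recursively defined h^{J_i}; the l^1_omega-valued integral is taken
   coordinatewise (Lebesgue integral of each coordinate) *)
Fixpoint hfun (R : realType) (d : nat) (L : 'I_d -> R) (q : nat)
  (t : nat -> R) (U : nat -> R -> R -> seqd R d -> seqd R d)
  (phi : nat -> seqd R d) (psi p : nat -> R -> seqd R d) (i : nat)
  : R -> seqd R d :=
  match i with
  | 0%N => fun _ _ => 0
  | i'.+1 => fun tt k =>
      U i tt (t i') (fun k' => phi i k' + hfun L q t U phi psi p i' (t i') k') k
      + \int[@lebesgue_measure R]_(s in [set s | t i' <= s <= tt])
          U i tt s (fun k' => Qop L q (psi i s) k' + p i s k') k
  end.

(* Main.v *)
Require Import Defs.
From HB Require Import structures.
From mathcomp Require Import all_boot all_order all_algebra.
From mathcomp Require Import all_classical all_reals all_analysis.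
From mathcomp Require Import measurable_realfun.
From mathcomp Require Import ring lra.
Import Order.TTheory GRing.Theory Num.Theory.
Import numFieldNormedType.Exports.
Local Open Scope classical_set_scope.
Local Open Scope ring_scope.

Lemma deriv_F (R : realType) (b g s : R) : s < b -> g < 1 ->
  is_derive s 1 (fun s => - ((b - s) `^ (1 - g)) / (1 - g)) ((b - s) `^ (- g)).
Proof.
move=> sb g1.
have bs : 0 < b - s by rewrite subr_gt0.
have h1 : is_derive s 1 (fun s : R => b - s) (0 - 1).
  exact: (@is_deriveB _ _ _ (cst b) id s 1 0 1).
have h2 : is_derive s 1 (((@powR R) ^~ (1 - g)) \o (fun s : R => b - s))
    (((1 - g) * (b - s) `^ (1 - g - 1)) * (0 - 1)).
  apply: is_derive1_comp =>//. exact: is_derive1_powR.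
have h3 := is_deriveN h2.
have h4 := @is_deriveZ _ _ _ _ (1 - g)^-1 _ _ _ h3.
have -> : (fun s => - ((b - s) `^ (1 - g)) / (1 - g)) = (1 - g)^-1 \*: - (((@powR R) ^~ (1 - g)) \o (fun s : R => b - s)).
  by apply/funext => x /=; rewrite mulrC.
apply: (is_derive_eq h4).
have g0 : 1 - g != 0 by rewrite subr_eq0 eq_sym lt_eqF.
rewrite /GRing.scale /= sub0r mulrN1 opprK mulrA mulVf // mul1r.
by congr (_ `^ _); rewrite addrAC subrr add0r.
Qed.

Lemma cont_of_der (R : realType) (f : R -> R) (x df : R) : is_derive x 1 f df -> {for x, continuous f}.
Proof. by case=> h _; apply/differentiable_continuous/derivable1_diffP. Qed.

Lemma deriv_f (R : realType) (b g s : R) : s < b ->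
  is_derive s 1 (fun s => (b - s) `^ (- g)) (((- g) * (b - s) `^ (- g - 1)) * (0 - 1)).
Proof.
move=> sb.
have bs : 0 < b - s by rewrite subr_gt0.
have h1 : is_derive s 1 (fun s : R => b - s) (0 - 1).
  exact: (@is_deriveB _ _ _ (cst b) id s 1 0 1).
change (is_derive s 1 (((@powR R) ^~ (- g)) \o (fun s : R => b - s))
    (((- g) * (b - s) `^ (- g - 1)) * (0 - 1))).
apply: is_derive1_comp =>//. exact: is_derive1_powR.
Qed.

Lemma FTC_pow (R : realType) (a c b g : R) : a < c -> c < b -> g < 1 ->
  (\int[@lebesgue_measure R]_(x in `[a, c]) ((b - x) `^ (- g))%:E =
   (- ((b - c) `^ (1 - g)) / (1 - g))%:E - (- ((b - a) `^ (1 - g)) / (1 - g))%:E)%E.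
Proof.
move=> ac cb g1.
apply: (@continuous_FTC2 R (fun s => (b - s) `^ (- g)) (fun s => - ((b - s) `^ (1 - g)) / (1 - g))) => //.
- apply: continuous_in_subspaceT => x; rewrite inE /= in_itv /= => /andP[_ xc].
  apply: cont_of_der; apply: deriv_f; exact: le_lt_trans xc cb.
- split.
  + move=> x; rewrite in_itv /= => /andP[_ xc].
    by apply: ex_derive; apply: deriv_F g1; exact: lt_trans xc cb.
  + apply: cvg_at_right_filter. exact: (@cont_of_der R _ _ _ (@deriv_F R b g a (lt_trans ac cb) g1)).
  + apply: cvg_at_left_filter; exact: (@cont_of_der R _ _ _ (@deriv_F R b g c cb g1)).
- move=> x; rewrite in_itv /= => /andP[_ xc].
  by rewrite derive1E; apply: derive_val; apply: deriv_F g1; exact: lt_trans xc cb.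
Qed.

Lemma int_pow (R : realType) (a b g : R) : a < b -> 0 <= g -> g < 1 ->
 (\int[@lebesgue_measure R]_(x in `]a, b[) ((b - x) `^ (- g))%:E
   <= ((b - a) `^ (1 - g) / (1 - g))%:E)%E.
Proof.
move=> ab g0 g1.
have mf : measurable_fun setT (fun x : R => ((b - x) `^ (- g))%:E).
  apply/measurable_EFinP; apply: (measurableT_comp (measurable_powR _)).
  by apply: measurable_funB.
set f := (fun x : R => ((b - x) `^ (- g))%:E) in mf *.
have ba : 0 < b - a by rewrite subr_gt0.
pose c (n : nat) : R := b - (b - a) / n.+2%:R.
have en n : 0 < (b - a) / n.+2%:R by apply: divr_gt0.
have cb n : c n < b by rewrite /c ltrBlDr ltrDl.
have ac n : a < c n.
  rewrite /c ltrBrDl -ltrBrDr ltr_pdivrMr // ltr_pMr //.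
  by rewrite ltr1n.
have cnd m n : (m <= n)%N -> c m <= c n.
  move=> mn; rewrite /c; apply: lerB => //; rewrite ler_pM2l // lef_pV2 ?posrE ?ltr0n //.
  by rewrite ler_nat ltnS ltnS.
pose P n := `]-oo, c n]%classic.
pose G n := f \_ (P n).
have G0 n x : (0 <= G n x)%E.
  by rewrite /G patchE; case: ifP => _ //; rewrite lee_fin powR_ge0.
have mG n : measurable_fun `]a, b[ (G n).
  apply: (@measurable_funS _ _ _ _ setT) => //.
  apply/(measurable_restrictT _ _).1 => //.
  exact: measurable_itv. exact: (measurable_funS _ _ mf).
have ndG x : `]a, b[%classic x -> {homo G^~ x : m n / (m <= n)%N >-> (m <= n)%E}.
  move=> _ m n mn; rewrite /G !patchE.
  case: ifP => xm; last by case: ifP => _ //; rewrite lee_fin powR_ge0.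
  rewrite ifT //; move: xm; rewrite /P !inE /= !in_itv /= => xm.
  exact: le_trans xm (cnd _ _ mn).
have -> : (\int[lebesgue_measure]_(x in `]a, b[) f x =
           \int[lebesgue_measure]_(x in `]a, b[) limn (G ^~ x))%E.
  apply: eq_integral => x; rewrite inE /= in_itv /= => /andP[ax xb].
  apply/esym/cvg_lim => //; apply: cvg_near_cst.
  have bx : 0 < b - x by rewrite subr_gt0.
  near=> n.
  rewrite /G patchE ifT // /P inE /= in_itv /= /c lerBrDr -lerBrDl.
  rewrite ler_pdivrMr // mulrC -ler_pdivrMr //.
  have hn : (n%:R <= n.+2%:R :> R) by rewrite ler_nat ltnW. apply: (le_trans _ hn).
  near: n; exact: nbhs_infty_ger.
rewrite monotone_convergence //.
apply: lime_le.
  apply: ereal_nondecreasing_is_cvgn => m n mn.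
  apply: ge0_le_integral => //.
  - exact: mG.
  - exact: mG.
  - by move=> x Dx; exact: (ndG x Dx m n mn).
apply: nearW => n.
rewrite -integral_mkcondr.
have -> : (`]a, b[ `&` P n = `]a, c n])%classic.
  apply/seteqP; split => x /=; rewrite /P !in_itv /=.
    by move=> [/andP[-> _]]; rewrite in_itv /= => ->.
  move=> /andP[-> xc]; split; last by rewrite in_itv /= ?andbT xc.
  by rewrite (le_lt_trans xc (cb n)).
rewrite integral_itv_obnd_cbnd; last exact: measurable_funS mf.
rewrite FTC_pow // -EFinB lee_fin.
have g1' : 0 < 1 - g by rewrite subr_gt0.
have h : 0 <= (b - c n) `^ (1 - g) / (1 - g) by rewrite divr_ge0 ?powR_ge0 ?ltW.
rewrite !mulNr; lra.
Unshelve. all: by end_near.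
Qed.

Lemma omega_ge0 (R : realType) (d : nat) (nuF : R) (k : mindex d) :
  1 <= nuF -> 0 <= omega nuF k.
Proof.
move=> h; rewrite /omega mulr_ge0 //; last by rewrite exprn_ge0 // (le_trans _ h).
by rewrite /alpha prodr_ge0 // => i _; rewrite exprn_ge0.
Qed.

Lemma wnorm_ge0 (R : realType) (d : nat) (nuF : R) (x : seqd R d) :
  1 <= nuF -> (0 <= wnorm nuF x)%E.
Proof.
move=> h; apply: esum_ge0 => k _.
by rewrite lee_fin mulr_ge0 // omega_ge0.
Qed.

Lemma wnorm0 (R : realType) (d : nat) (nuF : R) :
  wnorm nuF (fun _ : mindex d => 0 : R) = 0%E.
Proof. by apply: esum1 => k _; rewrite normr0 mul0r. Qed.

Lemma wnormD (R : realType) (d : nat) (nuF : R) (x y : seqd R d) :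
  1 <= nuF ->
  (wnorm nuF (fun k => (x k + y k)%R) <= wnorm nuF x + wnorm nuF y)%E.
Proof.
move=> h; rewrite /wnorm -esumD; last 2 first.
- by move=> k _; rewrite lee_fin mulr_ge0 // omega_ge0.
- by move=> k _; rewrite lee_fin mulr_ge0 // omega_ge0.
apply: le_esum => k _; rewrite -EFinD lee_fin -mulrDl.
by rewrite ler_wpM2r ?omega_ge0 // ler_normD.
Qed.

Lemma fine_abs (R : realType) (x : \bar R) : ((`|fine x|)%:E <= `|x|)%E.
Proof. by case: x => [r| |] //=; rewrite normr0 /= ?leey. Qed.

Lemma mink (R : realType) (d : nat) (nuF : R) (a b : R) (F : R -> seqd R d) (g : R -> R) :
  a < b -> 1 <= nuF ->
  (forall k, measurable_fun `[a, b] (fun s => F s k)) ->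
  measurable_fun `]a, b[ g ->
  (forall s, a < s < b -> (wnorm nuF (F s) <= (g s)%:E)%E) ->
  (wnorm nuF (fun k => (\int[lebesgue_measure]_(s in `[a, b]) F s k)%R)
     <= \int[lebesgue_measure]_(s in `]a, b[) (g s)%:E)%E.
Proof.
move=> ab h mF mg hg.
have om (k : mindex d) : 0 <= omega nuF k := @omega_ge0 R d nuF k h.
rewrite /wnorm /esum; apply: ge_ereal_sup => _ [A [finA _] <-].
rewrite fsbig_finite //=.
set s := finmap.enum_fset _.
apply: (@le_trans _ _ (\sum_(k <- s) \int[lebesgue_measure]_(x in `[a,b])
    ((`|F x k| * omega nuF k)%:E))%E).
  apply: lee_sum => k _.
  rewrite EFinM.
  under eq_integral do rewrite EFinM.
  rewrite [X in (_ <= X)%E]ge0_integralZr //; last 2 first.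
  - by apply/measurable_EFinP; apply: measurableT_comp => //; exact: mF.
  - by rewrite lee_fin.
  apply: (@lee_wpmul2r _ (omega nuF k)%:E); first by rewrite lee_fin.
  rewrite /Rintegral; apply: (le_trans (fine_abs _ _)).
  apply: (le_trans (le_abse_integral _ _ _)) => //.
    by apply/measurable_EFinP; exact: mF.
rewrite -ge0_integral_sum //; last first.
- by move=> k x _; rewrite lee_fin mulr_ge0.
- move=> k; apply/measurable_EFinP; apply: measurable_funM => //.
  by apply: measurableT_comp => //; exact: mF.
rewrite integral_itv_bndoo //; last first.
  apply: emeasurable_sum => k; apply/measurable_EFinP; apply: measurable_funM => //.
  apply: measurableT_comp => //; apply: measurable_funS (mF k) => //.
  exact: subset_itv_oo_cc.
apply: ge0_le_integral => //.
- by move=> x _; apply: sume_ge0 => k _; rewrite lee_fin mulr_ge0.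
- apply: emeasurable_sum => k; apply/measurable_EFinP; apply: measurable_funM => //.
  apply: measurableT_comp => //; apply: measurable_funS (mF k) => //.
  exact: subset_itv_oo_cc.
- exact/measurable_EFinP.
move=> x hx; have {}hx : a < x < b by move: hx; rewrite /= in_itv.
apply: le_trans (hg x hx).
apply: esum_ge; exists A; first by split.
by rewrite fsbig_finite.
Qed.

Lemma int_bound (R : realType) (a b g c1 c2 : R) : a < b -> 0 <= g < 1 ->
  0 <= c1 -> 0 <= c2 ->
  (\int[@lebesgue_measure R]_(s in `]a, b[) ((c1 * (b - s) `^ (- g) + c2)%:E)
   <= (c1 * ((b - a) `^ (1 - g) / (1 - g)) + c2 * (b - a))%:E)%E.
Proof.
move=> ab /andP[g0 g1] c10 c20.
have mp : measurable_fun `]a, b[ (fun s : R => (b - s) `^ (- g)).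
  apply: (@measurable_funS _ _ _ _ setT) => //.
  apply: (measurableT_comp (measurable_powR _)).
  by apply: measurable_funB.
under eq_integral do rewrite EFinD.
have h1 : forall x, `]a, b[%classic x -> (0 <= (c1 * (b - x) `^ (- g))%:E)%E.
  by move=> x _; rewrite lee_fin mulr_ge0 // powR_ge0.
have h2 : measurable_fun `]a, b[ (fun x => (c1 * (b - x) `^ (- g))%:E).
  by apply/measurable_EFinP; apply: measurable_funM.
have h3 : forall x, `]a, b[%classic x -> (0 <= c2%:E)%E.
  by move=> x _; rewrite lee_fin.
have h4 : measurable_fun `]a, b[ (fun x : R => c2%:E).
  by apply/measurable_EFinP.
rewrite ge0_integralD //.
rewrite EFinD; apply: leeD.
  under eq_integral do rewrite EFinM.
  rewrite ge0_integralZl_EFin //; last 2 first.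
  - by move=> x _; rewrite lee_fin powR_ge0.
  - exact/measurable_EFinP.
  rewrite EFinM; apply: lee_pmul => //.
  by apply: integral_ge0 => x _; rewrite lee_fin powR_ge0.
  exact: int_pow.
have hm := @lebesgue_measure_itv R `]a, b[%R. rewrite integral_cst //. rewrite [X in (_ * X)%E]hm /= lte_fin ab -EFinD -EFinM.
by rewrite mulrC.
Qed.

Lemma core (R : realType) (d : nat) (L : 'I_d -> R) (nuF : R) (q : nat) (t : nat -> R) (gamma : R)
 (U : nat -> R -> R -> seqd R d -> seqd R d) (phi : nat -> seqd R d) (psi p : nat -> R -> seqd R d)
 (i : nat) (tt A Bq B Psi P : R) :
 1 <= nuF -> t i < tt -> 0 <= gamma < 1 -> 0 <= Bq -> 0 <= B -> 0 <= Psi -> 0 <= P ->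
 (forall s, t i <= s <= tt -> forall x y : seqd R d,
    U i.+1 tt s (fun k => x k + y k) = (fun k => U i.+1 tt s x k + U i.+1 tt s y k)) ->
 (forall x, (wnorm nuF (U i.+1 tt (t i) x) <= A%:E * wnorm nuF x)%E) ->
 (forall s, t i < s < tt -> forall x,
    (((tt - s) `^ gamma)%:E * wnorm nuF (U i.+1 tt s (Qop L q x)) <= Bq%:E * wnorm nuF x)%E) ->
 (forall s, t i < s < tt -> forall x, (wnorm nuF (U i.+1 tt s x) <= B%:E * wnorm nuF x)%E) ->
 (forall s, t i < s < tt -> (wnorm nuF (psi i.+1 s) <= Psi%:E)%E) ->
 (forall s, t i < s < tt -> (wnorm nuF (p i.+1 s) <= P%:E)%E) ->
 (forall k, measurable_fun [set s | t i <= s <= tt]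
    (fun s => U i.+1 tt s (fun k' => Qop L q (psi i.+1 s) k' + p i.+1 s k') k)) ->
 (wnorm nuF (hfun L q t U phi psi p i.+1 tt) <=
   A%:E * wnorm nuF (fun k => (phi i.+1 k + hfun L q t U phi psi p i (t i) k)%R)
   + (Bq * Psi * ((tt - t i) `^ (1 - gamma) / (1 - gamma)) + B * P * (tt - t i))%:E)%E.
Proof.
move=> h1 ab hg Bq0 B0 Psi0 P0 lin hA hQ hB hPsi hP mU.
cbn [hfun]. apply: le_trans (@wnormD R d nuF _ _ h1) _.
apply: leeD; first exact: hA.
have hD : [set s | t i <= s <= tt] = `[t i, tt]%classic.
  by apply/seteqP; split => x /=; rewrite in_itv.
rewrite hD in mU *.
apply: le_trans (@mink R d nuF (t i) tt _ (fun s => Bq * Psi * (tt - s) `^ (- gamma) + B * P) ab h1 mU _ _) _.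
- apply: measurable_funD => //; apply: measurable_funM => //.
  apply: (@measurable_funS _ _ _ _ setT) => //.
  apply: (measurableT_comp (measurable_powR _)).
  by apply: measurable_funB.
- move=> s hs.
  have hs' : t i <= s <= tt by case/andP: hs => /ltW -> /ltW ->.
  rewrite (lin s hs').
  apply: le_trans (@wnormD R d nuF _ _ h1) _.
  rewrite EFinD; apply: leeD.
  + have st : 0 < tt - s by case/andP: hs => _; rewrite subr_gt0.
    have pos : 0 < (tt - s) `^ gamma by rewrite powR_gt0.
    rewrite powRN mulrC EFinM lee_pdivlMl //.
    apply: le_trans (hQ s hs (psi i.+1 s)) _.
    rewrite EFinM; apply: lee_pmul => //; first exact: wnorm_ge0.
    exact: hPsi.
  + apply: le_trans (hB s hs (p i.+1 s)) _.
    rewrite EFinM; apply: lee_pmul => //; first exact: wnorm_ge0.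
    exact: hP.
- by apply: int_bound => //; exact: mulr_ge0.
Qed.

Lemma bigmax_fin (R : realType) (K : nat) (F : nat -> \bar R) :
  (forall i, (0 < i <= K)%N -> (0 <= F i)%E /\ (F i < +oo)%E) ->
  exists r : R, [/\ 0 <= r, \big[Order.max/0%E]_(1 <= i < K.+1) F i = r%:E
     & forall i, (0 < i <= K)%N -> (F i <= r%:E)%E].
Proof.
move=> hF.
have [r [r0 hr]] : exists r : R, 0 <= r /\ \big[Order.max/0%E]_(1 <= i < K.+1) F i = r%:E.
  rewrite big_seq.
  apply: (big_ind (fun x => exists r : R, 0 <= r /\ x = r%:E)).
  - by exists 0.
  - move=> x y [a [a0 ->]] [b [b0 ->]].
    by exists (Num.max a b); split; [rewrite le_max a0 | rewrite EFin_max].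
  - move=> i; rewrite mem_index_iota => /andP[i1 iK].
    have [h1 h2] : (0 <= F i)%E /\ (F i < +oo)%E by apply: hF; rewrite i1 -ltnS.
    exists (fine (F i)); split; first by rewrite fine_ge0.
    by rewrite fineK // ge0_fin_numE.
exists r; split => // i hi.
rewrite -hr; apply: le_bigmax_seq => //.
by rewrite mem_index_iota; case/andP: hi => -> /=; rewrite ltnS.
Qed.

Lemma bigmax_le_nat (R : realType) (K : nat) (F : nat -> \bar R) (x : \bar R) :
  (0 <= x)%E -> (forall i, (0 < i <= K)%N -> (F i <= x)%E) ->
  (\big[Order.max/0%E]_(1 <= i < K.+1) F i <= x)%E.
Proof.
move=> x0 hF; rewrite big_seq; apply: bigmax_le => // i.
by rewrite mem_index_iota => /andP[i1 iK]; apply: hF; rewrite i1 -ltnS.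
Qed.

Definition SL {R : realType} (Wtt : nat -> R) (n : nat) : R :=
  \sum_(1 <= j < n.+1) Wp Wtt n j.-1.
Definition SS {R : realType} (Wtt c : nat -> R) (n : nat) : R :=
  \sum_(1 <= j < n.+1) c j * Wp Wtt n j.

Lemma Wp_nn {R : realType} (Wtt : nat -> R) n : Wp Wtt n n = 1.
Proof. by rewrite /Wp big_geq. Qed.

Lemma Wp_S {R : realType} (Wtt : nat -> R) n j : (j <= n)%N ->
  Wp Wtt n.+1 j = Wp Wtt n j * Wtt n.+1.
Proof. by move=> jn; rewrite /Wp big_nat_recr //= ltnS. Qed.

Lemma SL_S {R : realType} (Wtt : nat -> R) n :
  SL Wtt n.+1 = Wtt n.+1 * (1 + SL Wtt n).
Proof.
rewrite /SL big_nat_recr //= -/(SL Wtt n).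
rewrite (@Wp_S _ _ _ _ (leqnn n)) Wp_nn mul1r.
rewrite (@eq_big_nat _ _ _ 1 n.+1 _ (fun j => Wp Wtt n j.-1 * Wtt n.+1)); last first.
  by move=> j /andP[j1 jn]; rewrite Wp_S // (leq_trans (leq_pred j)).
by rewrite -mulr_suml mulrDr mulr1 addrC mulrC.
Qed.

Lemma SS_S {R : realType} (Wtt c : nat -> R) n :
  SS Wtt c n.+1 = c n.+1 + Wtt n.+1 * SS Wtt c n.
Proof.
rewrite /SS big_nat_recr //= Wp_nn mulr1.
rewrite (@eq_big_nat _ _ _ 1 n.+1 _ (fun j => (c j * Wp Wtt n j) * Wtt n.+1)); last first.
  by move=> j /andP[j1 jn]; rewrite Wp_S // mulrA.
by rewrite -mulr_suml addrC mulrC.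
Qed.

Lemma row_split {R : realType} (K n : nat) (f : nat -> R) : (n < K)%N ->
  (forall j, (n.+1 < j)%N -> f j = 0) ->
  \sum_(1 <= j < K.+1) f j = \sum_(1 <= j < n.+1) f j + f n.+1.
Proof.
move=> nK f0.
rewrite (@big_cat_nat _ _ _ n.+2) //=.
have -> : \sum_(n.+2 <= j < K.+1) f j = 0.
  rewrite big_nat_cond big1 // => j /andP[/andP[j1 _] _]; exact: f0.
by rewrite addr0 big_nat_recr.
Qed.

Lemma rowL {R : realType} (WS Wtt : nat -> R) K n : (n < K)%N ->
  \sum_(1 <= j < K.+1) Ml WS Wtt n.+1 j = WS n.+1 * (1 + SL Wtt n).
Proof.
move=> nK; rewrite (@row_split _ K n) //; last first.
  by move=> j hj; rewrite /Ml leqNgt hj.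
rewrite /Ml leqnn /= Wp_nn mulr1 /SL mulrDr mulr1 addrC mulr_sumr.
congr (_ + _); apply: eq_big_nat => j /andP[_ jn].
by rewrite ltnW.
Qed.

Lemma rowX {R : realType} (t : nat -> R) g (WS WSq Wtt WqtJ : nat -> R) K n : (n < K)%N ->
  \sum_(1 <= j < K.+1) MX t g WS WSq Wtt WqtJ n.+1 j =
  tauhat t g n.+1 * WSq n.+1 + WS n.+1 * SS Wtt (fun j => tauhat t g j * WqtJ j) n.
Proof.
move=> nK; rewrite (@row_split _ K n) //; last first.
  by move=> j hj; rewrite /MX gtn_eqF // ltnNge ltnW.
rewrite /MX eqxx /SS mulr_sumr addrC.
congr (_ + _); apply: eq_big_nat => j /andP[_ jn].
rewrite ltn_eqF // jn /=; ring.
Qed.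

Lemma rowY {R : realType} (t : nat -> R) (WS Wtt WtJ : nat -> R) K n : (n < K)%N ->
  \sum_(1 <= j < K.+1) MY t WS Wtt WtJ n.+1 j =
  tau t n.+1 * WS n.+1 + WS n.+1 * SS Wtt (fun j => tau t j * WtJ j) n.
Proof.
move=> nK; rewrite (@row_split _ K n) //; last first.
  by move=> j hj; rewrite /MY gtn_eqF // ltnNge ltnW.
rewrite /MY eqxx /SS mulr_sumr addrC.
congr (_ + _); apply: eq_big_nat => j /andP[_ jn].
rewrite ltn_eqF // jn /=; ring.
Qed.

Lemma row_le_infnorm {R : realType} K (M : nat -> nat -> R) i : (0 < i <= K)%N ->
  \sum_(1 <= j < K.+1) M i j <= infnorm K M.
Proof.
move=> /andP[i0 iK].
apply: le_trans (ler_sum _ (fun j _ => ler_norm (M i j))) _.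
rewrite /infnorm; apply: (@le_bigmax_seq _ _ _ _ _ i (fun _ => true) (fun i => \sum_(1 <= j < K.+1) `|M i j|)) => //.
by rewrite mem_index_iota i0 ltnS.
Qed.

Theorem mainTheorem9 (R : realType) (d : nat) (L : 'I_d -> R) (nuF : R)
  (q K : nat) (t : nat -> R) (gamma : R)
  (U : nat -> R -> R -> seqd R d -> seqd R d)
  (WS WSq WtJ WqtJ Wtt : nat -> R)
  (phi : nat -> seqd R d) (psi p : nat -> R -> seqd R d) :
  (0 < d)%N -> (forall j, 0 < L j) -> 1 <= nuF ->
  (q = 0%N \/ q = 2%N) ->
  (0 < K)%N -> t 0%N = 0 -> (forall i, (0 < i <= K)%N -> t i.-1 < t i) ->
  0 <= gamma < 1 ->
  (* positivity of the constants *)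
  (forall i, (0 < i <= K)%N ->
     [/\ 0 < WS i, 0 < WSq i, 0 < WtJ i, 0 < WqtJ i & 0 < Wtt i]) ->
  (* each U_{J_i}(t,s) is linear *)
  (forall i, (0 < i <= K)%N -> forall tt s, t i.-1 <= s <= tt -> tt <= t i ->
     (forall x y : seqd R d,
        U i tt s (fun k => x k + y k) = (fun k => U i tt s x k + U i tt s y k)) /\
     (forall (c : R) (x : seqd R d),
        U i tt s (fun k => c * x k) = (fun k => c * U i tt s x k))) ->
  (* evolution-operator identities on l^1_omega *)
  (forall i, (0 < i <= K)%N -> forall s x, t i.-1 <= s <= t i ->
     (wnorm nuF x < +oo)%E -> U i s s x = x) ->
  (forall i, (0 < i <= K)%N -> forall tt r s x,
     t i.-1 <= s -> s <= r -> r <= tt -> tt <= t i ->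
     (wnorm nuF x < +oo)%E -> U i tt r (U i r s x) = U i tt s x) ->
  (* the bounds on U_{J_i} *)
  (forall i, (0 < i <= K)%N -> forall tt s, t i.-1 <= s -> s < tt -> tt <= t i ->
     forall x, (wnorm nuF (U i tt s x) <= (WS i)%:E * wnorm nuF x)%E) ->
  (forall i, (0 < i <= K)%N -> forall tt s, t i.-1 <= s -> s < tt -> tt <= t i ->
     forall x, (((tt - s) `^ gamma)%:E * wnorm nuF (U i tt s (Qop L q x))
                  <= (WSq i)%:E * wnorm nuF x)%E) ->
  (forall i, (0 < i <= K)%N -> forall s, t i.-1 <= s < t i ->
     forall x, (wnorm nuF (U i (t i) s x) <= (WtJ i)%:E * wnorm nuF x)%E) ->
  (forall i, (0 < i <= K)%N -> forall s, t i.-1 <= s < t i ->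
     forall x, (((t i - s) `^ gamma)%:E * wnorm nuF (U i (t i) s (Qop L q x))
                  <= (WqtJ i)%:E * wnorm nuF x)%E) ->
  (forall i, (0 < i <= K)%N ->
     forall x, (wnorm nuF (U i (t i) (t i.-1) x) <= (Wtt i)%:E * wnorm nuF x)%E) ->
  (* the data: phi^{J_i} in l^1_omega, psi^{J_i}, p^{J_i} in X_i *)
  (forall i, (0 < i <= K)%N -> (wnorm nuF (phi i) < +oo)%E) ->
  (forall i, (0 < i <= K)%N -> Xmem nuF (J t i) (psi i) /\ Xmem nuF (J t i) (p i)) ->
  (* the integrands defining h^{J_i} are (coordinatewise) measurable *)
  (forall i, (0 < i <= K)%N -> forall tt, J t i tt -> forall k,
     measurable_fun [set s | t i.-1 <= s <= tt]
       (fun s => U i tt s (fun k' => Qop L q (psi i s) k' + p i s k') k)) ->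
  (\big[Order.max/0%E]_(1 <= i < K.+1)
      Xnorm nuF (J t i) (hfun L q t U phi psi p i)
   <= (infnorm K (Ml WS Wtt))%:E
        * \big[Order.max/0%E]_(1 <= i < K.+1) wnorm nuF (phi i)
      + (infnorm K (MX t gamma WS WSq Wtt WqtJ))%:E
        * \big[Order.max/0%E]_(1 <= i < K.+1) Xnorm nuF (J t i) (psi i)
      + (infnorm K (MY t WS Wtt WtJ))%:E
        * \big[Order.max/0%E]_(1 <= i < K.+1) Xnorm nuF (J t i) (p i))%E.
Proof.
move=> hd hL hnu hq hK ht0 htinc hgam hpos hlin hid hcomp hWS hWSq hWtJ hWqtJ hWtt hphi hX hmeas.
have hJ i : (0 < i <= K)%N -> J t i (t i).
  by move=> hi; rewrite /J /= htinc // lexx.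
have Xge0 (f : R -> seqd R d) i : (0 < i <= K)%N -> (0 <= Xnorm nuF (J t i) f)%E.
  move=> hi; apply: le_trans (@wnorm_ge0 R d nuF (f (t i)) hnu) _.
  by apply: ereal_sup_ubound; exists (t i) => //; exact: hJ.
have [Phi [Phi0 ePhi hPhi]] := @bigmax_fin R K (fun i => wnorm nuF (phi i))
  (fun i hi => conj (@wnorm_ge0 R d nuF _ hnu) (hphi i hi)).
have [Psi [Psi0 ePsi hPsi]] := @bigmax_fin R K (fun i => Xnorm nuF (J t i) (psi i))
  (fun i hi => conj (Xge0 _ i hi) (let: And3 _ _ h := (hX i hi).1 in h)).
have [P [P0 eP hP]] := @bigmax_fin R K (fun i => Xnorm nuF (J t i) (p i))
  (fun i hi => conj (Xge0 _ i hi) (let: And3 _ _ h := (hX i hi).2 in h)).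
rewrite ePhi ePsi eP.
have hPsis i s : (0 < i <= K)%N -> J t i s -> (wnorm nuF (psi i s) <= Psi%:E)%E.
  move=> hi hs; apply: le_trans (hPsi i hi); apply: ereal_sup_ubound; by exists s.
have hPs i s : (0 < i <= K)%N -> J t i s -> (wnorm nuF (p i s) <= P%:E)%E.
  move=> hi hs; apply: le_trans (hP i hi); apply: ereal_sup_ubound; by exists s.
have g1 : 0 < 1 - gamma by case/andP: hgam => _; rewrite subr_gt0.
pose cX := fun j => tauhat t gamma j * WqtJ j.
pose cY := fun j => tau t j * WtJ j.
pose E n := SL Wtt n * Phi + SS Wtt cX n * Psi + SS Wtt cY n * P.
have claimA : forall n, (n <= K)%N ->
    (wnorm nuF (hfun L q t U phi psi p n (t n)) <= (E n)%:E)%E.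
  elim=> [_|n IH hn].
    by rewrite /= wnorm0 /E /SL /SS !big_geq // !mul0r !addr0.
  have hi : (0 < n.+1 <= K)%N by rewrite hn.
  have [WS0 WSq0 WtJ0 WqtJ0 Wtt0] := hpos _ hi.
  have tn : t n < t n.+1 := htinc _ hi.
  apply: le_trans (@core R d L nuF q t gamma U phi psi p n (t n.+1) (Wtt n.+1) (WqtJ n.+1)
     (WtJ n.+1) Psi P hnu tn hgam (ltW WqtJ0) (ltW WtJ0) Psi0 P0 _ _ _ _ _ _ _) _.
  - by move=> s hs x y; exact: ((hlin _ hi (t n.+1) s hs (lexx _)).1 x y).
  - exact: hWtt _ hi.
  - by move=> s /andP[ns sn] x; apply: hWqtJ => //; rewrite (ltW ns) sn.
  - by move=> s /andP[ns sn] x; apply: hWtJ => //; rewrite (ltW ns) sn.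
  - by move=> s /andP[ns sn]; apply: hPsis hi _; rewrite /J /= ns (ltW sn).
  - by move=> s /andP[ns sn]; apply: hPs hi _; rewrite /J /= ns (ltW sn).
  - by move=> k; exact: (hmeas _ hi _ (hJ _ hi) k).
  have h1 : (wnorm nuF (fun k => (phi n.+1 k + hfun L q t U phi psi p n (t n) k)%R)
      <= (Phi + E n)%:E)%E.
    apply: le_trans (@wnormD R d nuF _ _ hnu) _.
    by rewrite EFinD; apply: leeD; [exact: hPhi | exact: IH (ltnW hn)].
  have h2 : ((Wtt n.+1)%:E * wnorm nuF (fun k => (phi n.+1 k + hfun L q t U phi psi p n (t n) k)%R)
      <= (Wtt n.+1)%:E * (Phi + E n)%:E)%E.
    apply: lee_pmul => //; [by rewrite lee_fin ltW | exact: wnorm_ge0].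
  apply: le_trans (leeD h2 (lexx _)) _.
  rewrite -EFinM -EFinD lee_fin /E SL_S !SS_S /cX /cY /tauhat /tau /=.
  by rewrite le_eqVlt; apply/orP; left; apply/eqP; ring.
pose FF n := WS n.+1 * (1 + SL Wtt n) * Phi
  + (tauhat t gamma n.+1 * WSq n.+1 + WS n.+1 * SS Wtt cX n) * Psi
  + (tau t n.+1 * WS n.+1 + WS n.+1 * SS Wtt cY n) * P.
have claimB : forall n tt, (n < K)%N -> J t n.+1 tt ->
    (wnorm nuF (hfun L q t U phi psi p n.+1 tt) <= (FF n)%:E)%E.
  move=> n tt hn hJtt.
  have /andP[ntt ttn] : t n < tt <= t n.+1 := hJtt.
  have hi : (0 < n.+1 <= K)%N by rewrite hn.
  have [WS0 WSq0 WtJ0 WqtJ0 Wtt0] := hpos _ hi.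
  apply: le_trans (@core R d L nuF q t gamma U phi psi p n tt (WS n.+1) (WSq n.+1)
     (WS n.+1) Psi P hnu ntt hgam (ltW WSq0) (ltW WS0) Psi0 P0 _ _ _ _ _ _ _) _.
  - by move=> s hs x y; exact: ((hlin _ hi tt s hs ttn).1 x y).
  - by move=> x; exact: (hWS _ hi tt (t n) (lexx _) ntt ttn x).
  - by move=> s /andP[ns sn] x; exact: (hWSq _ hi tt s (ltW ns) sn ttn x).
  - by move=> s /andP[ns sn] x; exact: (hWS _ hi tt s (ltW ns) sn ttn x).
  - move=> s /andP[ns sn]; apply: hPsis hi _; rewrite /J /= ns.
    exact: ltW (lt_le_trans sn ttn).
  - move=> s /andP[ns sn]; apply: hPs hi _; rewrite /J /= ns.
    exact: ltW (lt_le_trans sn ttn).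
  - by move=> k; exact: (hmeas _ hi _ hJtt k).
  have h1 : (wnorm nuF (fun k => (phi n.+1 k + hfun L q t U phi psi p n (t n) k)%R)
      <= (Phi + E n)%:E)%E.
    apply: le_trans (@wnormD R d nuF _ _ hnu) _.
    by rewrite EFinD; apply: leeD; [exact: hPhi | exact: claimA (ltnW hn)].
  have h2 : ((WS n.+1)%:E * wnorm nuF (fun k => (phi n.+1 k + hfun L q t U phi psi p n (t n) k)%R)
      <= (WS n.+1)%:E * (Phi + E n)%:E)%E.
    apply: lee_pmul => //; [by rewrite lee_fin ltW | exact: wnorm_ge0].
  apply: le_trans (leeD h2 (lexx _)) _.
  rewrite -EFinM -EFinD lee_fin.
  have a0 : 0 <= tt - t n by rewrite subr_ge0 ltW.
  have a1 : tt - t n <= tau t n.+1 by rewrite /tau /= lerB.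
  have hpw : (tt - t n) `^ (1 - gamma) <= (tau t n.+1) `^ (1 - gamma).
    apply: ge0_ler_powR => //; rewrite ?nnegrE; [exact: ltW | exact: le_trans a0 a1].
  have X : WSq n.+1 * Psi * ((tt - t n) `^ (1 - gamma) / (1 - gamma))
      <= WSq n.+1 * Psi * tauhat t gamma n.+1.
    rewrite /tauhat; apply: ler_wpM2l; first by rewrite mulr_ge0 // ltW.
    by apply: ler_wpM2r => //; rewrite invr_ge0 ltW.
  have Y : WS n.+1 * P * (tt - t n) <= WS n.+1 * P * tau t n.+1.
    by apply: ler_wpM2l => //; rewrite mulr_ge0 // ltW.
  have -> : FF n = WS n.+1 * (Phi + E n)
      + (WSq n.+1 * Psi * tauhat t gamma n.+1 + WS n.+1 * P * tau t n.+1).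
    by rewrite /FF /E /cX /cY; ring.
  lra.
have iN (M : nat -> nat -> R) : 0 <= infnorm K M.
  by rewrite /infnorm; exact: bigmax_ge_id.
apply: bigmax_le_nat.
  by rewrite -!EFinM -!EFinD lee_fin !addr_ge0 // mulr_ge0.
move=> i /andP[i0 iK]; case: i i0 iK => // n _ nK.
apply: (@le_trans _ _ (FF n)%:E).
  apply: ge_ereal_sup => _ [s Js <-]; exact: claimB.
rewrite -!EFinM -!EFinD lee_fin /FF -(rowL WS Wtt K n nK) -(rowX t gamma WS WSq Wtt WqtJ K n nK).
rewrite -(rowY t WS Wtt WtJ K n nK).
have hi : (0 < n.+1 <= K)%N by rewrite nK.
by rewrite !lerD // ler_wpM2r // row_le_infnorm.
Qed.
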